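(* Let $(x,b)$ be a \textsc{Set Radius Strip Cover} instance with $n$ sensors and optimal lifetime $T$. Add two dummy sensors: sensor $0$ with $x_0=0$, $b_0=0$, and sensor $n+1$ with $x_{n+1}=1$, $b_{n+1}=0$. Then there exist $i,k\in\{0,\ldots,n+1\}$ with $i<k$ and $x_i<x_k$ such that $T=\frac{b_k+b_i}{x_k-x_i}$.
   Context: \textsc{Set Radius Strip Cover}: An instance is a pair $(x,b)$, where $x=(x_1,\ldots,x_n)\in[0,1]^n$ with $x_1\le\cdots\le x_n$ are sensor locations and $b=(b_1,\ldots,b_n)$, $b_i\ge0$ rational, are battery charges. A solution is a radial assignment $\rho\in[0,\infty)^n$; all sensors are activated at time $0$. Sensor $i$ with $\rho_i>0$ covers $[x_i-\rho_i,x_i+\rho_i]$ during $[0,b_i/\rho_i]$; a sensor with $\rho_i=0$ is inactive and covers nothing. The lifetime of $\rho$ is the maximum $T$ such that for every $t\in[0,T]$, $[0,1]\subseteq\bigcup_{i:\rho_i>0,\ b_i/\rho_i\ge t}[x_i-\rho_i,x_i+\rho_i]$; the optimal lifetime is the maximum lifetime over all radial assignments. *)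

(* Defs.v *)
From Stdlib Require Import Reals QArith Qreals Lra Arith.
Open Scope R_scope.

(* Sensors are indexed 1..n.  x i = location, b i = battery (rational). *)

Definition valid_instance (n : nat) (x : nat -> R) (b : nat -> Q) : Prop :=
  (forall i, (1 <= i <= n)%nat -> 0 <= x i <= 1) /\
  (forall i j, (1 <= i)%nat -> (i <= j)%nat -> (j <= n)%nat -> x i <= x j) /\
  (forall i, (1 <= i <= n)%nat -> (0 <= b i)%Q).

Definition radial (n : nat) (rho : nat -> R) : Prop :=
  forall i, (1 <= i <= n)%nat -> 0 <= rho i.

Definition covered_at (n : nat) (x : nat -> R) (b : nat -> Q)
    (rho : nat -> R) (t : R) : Prop :=
  forall p, 0 <= p <= 1 ->
    exists i, (1 <= i <= n)%nat /\ 0 < rho i /\ t <= Q2R (b i) / rho i /\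
              x i - rho i <= p <= x i + rho i.

Definition covers_until (n : nat) (x : nat -> R) (b : nat -> Q)
    (rho : nat -> R) (L : R) : Prop :=
  0 <= L /\ forall t, 0 <= t <= L -> covered_at n x b rho t.

Definition is_lifetime (n : nat) (x : nat -> R) (b : nat -> Q)
    (rho : nat -> R) (L : R) : Prop :=
  covers_until n x b rho L /\
  (forall L', covers_until n x b rho L' -> L' <= L).

Definition optimal_lifetime (n : nat) (x : nat -> R) (b : nat -> Q) (T : R)
  : Prop :=
  (exists rho, radial n rho /\ is_lifetime n x b rho T) /\
  (forall rho L, radial n rho -> is_lifetime n x b rho L -> L <= T).

Definition xext (n : nat) (x : nat -> R) (i : nat) : R :=
  if Nat.eqb i 0 then 0 else if Nat.eqb i (S n) then 1 else x i.

Definition bext (n : nat) (b : nat -> Q) (i : nat) : R :=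
  if Nat.eqb i 0 then 0 else if Nat.eqb i (S n) then 0 else Q2R (b i).

(* Main.v *)
Require Import Defs.
From Stdlib Require Import Reals QArith Qreals Arith.
From Stdlib Require Import Lra Lia Psatz Classical.
Open Scope R_scope.

Lemma eps1 (g : nat -> R) (T : R) (N : nat) :
  exists e, 0 < e /\ forall i, (i <= N)%nat -> g i <= T \/ T + e < g i.
Proof.
  induction N as [|N [e0 [He0 H0]]].
  - destruct (Rle_dec (g 0%nat) T).
    + exists 1; split; [lra|]. intros i Hi. replace i with 0%nat by lia. auto.
    + exists ((g 0%nat - T)/2); split; [lra|]. intros i Hi.
      replace i with 0%nat by lia. right; lra.
  - destruct (Rle_dec (g (S N)) T).
    + exists e0; split; auto. intros i Hi.
      destruct (Nat.eq_dec i (S N)); [subst; auto|]. apply H0; lia.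
    + exists (Rmin e0 ((g (S N) - T)/2)); split.
      { apply Rmin_pos; lra. }
      intros i Hi. pose proof (Rmin_l e0 ((g (S N) - T)/2)).
      pose proof (Rmin_r e0 ((g (S N) - T)/2)).
      destruct (Nat.eq_dec i (S N)); [subst; right; lra|].
      destruct (H0 i ltac:(lia)); [left|right]; lra.
Qed.

Lemma eps2 (f : nat -> nat -> R) (T : R) (N : nat) :
  exists e, 0 < e /\ forall i k, (i <= N)%nat -> (k <= N)%nat ->
    f i k <= T \/ T + e < f i k.
Proof.
  induction N as [|N [e0 [He0 H0]]].
  - destruct (eps1 (f 0%nat) T 0) as [e [He H]]. exists e; split; auto.
    intros i k Hi Hk. replace i with 0%nat by lia. auto.
  - destruct (eps1 (fun i => f i (S N)) T (S N)) as [e1 [He1 H1]].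
    destruct (eps1 (fun k => f (S N) k) T (S N)) as [e2 [He2 H2]].
    exists (Rmin e0 (Rmin e1 e2)); split.
    { repeat apply Rmin_pos; lra. }
    intros i k Hi Hk.
    pose proof (Rmin_l e0 (Rmin e1 e2)). pose proof (Rmin_r e0 (Rmin e1 e2)).
    pose proof (Rmin_l e1 e2). pose proof (Rmin_r e1 e2).
    destruct (Nat.eq_dec i (S N)).
    + subst. destruct (H2 k Hk); [left|right]; simpl in *; lra.
    + destruct (Nat.eq_dec k (S N)).
      * subst. destruct (H1 i Hi); [left|right]; simpl in *; lra.
      * destruct (H0 i k ltac:(lia) ltac:(lia)); [left|right]; lra.
Qed.

Lemma argmax (P : nat -> Prop) (g : nat -> R) (N : nat) :
  (exists w, (w <= N)%nat /\ P w) ->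
  exists i, (i <= N)%nat /\ P i /\ forall j, (j <= N)%nat -> P j -> g j <= g i.
Proof.
  induction N as [|N IH]; intros [w [Hw Pw]].
  - exists 0%nat. replace w with 0%nat in Pw by lia. repeat split; auto.
    intros j Hj _. replace j with 0%nat by lia. lra.
  - destruct (classic (exists w, (w <= N)%nat /\ P w)) as [Hex|Hnex].
    + destruct (IH Hex) as [i0 [Hi0 [Pi0 Hmax]]].
      destruct (classic (P (S N))) as [PS|nPS].
      * destruct (Rle_dec (g i0) (g (S N))).
        -- exists (S N); repeat split; auto. intros j Hj Pj.
           destruct (Nat.eq_dec j (S N)); [subst; lra|].
           specialize (Hmax j ltac:(lia) Pj); lra.
        -- exists i0; repeat split; auto. intros j Hj Pj.
           destruct (Nat.eq_dec j (S N)); [subst; lra|].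
           apply Hmax; auto; lia.
      * exists i0; repeat split; auto. intros j Hj Pj.
        destruct (Nat.eq_dec j (S N)); [subst; contradiction|].
        apply Hmax; auto; lia.
    + assert (w = S N).
      { destruct (Nat.eq_dec w (S N)); auto. exfalso; apply Hnex.
        exists w; split; auto; lia. }
      subst. exists (S N); repeat split; auto. intros j Hj Pj.
      destruct (Nat.eq_dec j (S N)); [subst; lra|].
      exfalso; apply Hnex; exists j; split; auto; lia.
Qed.

Lemma Rdiv_le_0_compat a c : 0 <= a -> 0 < c -> 0 <= a / c.
Proof. intros. unfold Rdiv. apply Rmult_le_pos; auto. left; apply Rinv_0_lt_compat; auto. Qed.

Lemma xext_real n x i : (1 <= i <= n)%nat -> xext n x i = x i.
Proof.
  intros H. unfold xext. destruct (Nat.eqb_spec i 0); [lia|].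
  destruct (Nat.eqb_spec i (S n)); [lia|]. reflexivity.
Qed.
Lemma bext_real n b i : (1 <= i <= n)%nat -> bext n b i = Q2R (b i).
Proof.
  intros H. unfold bext. destruct (Nat.eqb_spec i 0); [lia|].
  destruct (Nat.eqb_spec i (S n)); [lia|]. reflexivity.
Qed.
Lemma xext0 n x : xext n x 0 = 0. Proof. reflexivity. Qed.
Lemma bext0 n b : bext n b 0 = 0. Proof. reflexivity. Qed.
Lemma xextN n x : xext n x (S n) = 1.
Proof. unfold xext. simpl. rewrite Nat.eqb_refl. reflexivity. Qed.
Lemma bextN n b : bext n b (S n) = 0.
Proof. unfold bext. simpl. rewrite Nat.eqb_refl. reflexivity. Qed.

Lemma Q2R_nonneg q : (0 <= q)%Q -> 0 <= Q2R q.
Proof.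
  intros H. apply Qle_Rle in H. unfold Q2R in H at 1. simpl in H.
  rewrite Rmult_0_l in H. exact H.
Qed.

Lemma xext_range n x b i : valid_instance n x b -> (i <= S n)%nat ->
  0 <= xext n x i <= 1.
Proof.
  intros [H1 [H2 H3]] Hi.
  destruct (Nat.eq_dec i 0); [subst; rewrite xext0; lra|].
  destruct (Nat.eq_dec i (S n)); [subst; rewrite xextN; lra|].
  rewrite xext_real by lia. apply H1; lia.
Qed.


Lemma bext_nonneg n x b i : valid_instance n x b -> (i <= S n)%nat ->
  0 <= bext n b i.
Proof.
  intros [H1 [H2 H3]] Hi.
  destruct (Nat.eq_dec i 0); [subst; rewrite bext0; lra|].
  destruct (Nat.eq_dec i (S n)); [subst; rewrite bextN; lra|].
  rewrite bext_real by lia. apply Q2R_nonneg, H3; lia.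
Qed.

Lemma xext_mono n x b i j : valid_instance n x b -> (i <= j)%nat ->
  (j <= S n)%nat -> xext n x i <= xext n x j.
Proof.
  intros Hv Hij Hj. pose proof (xext_range n x b i Hv ltac:(lia)).
  pose proof (xext_range n x b j Hv Hj).
  destruct (Nat.eq_dec i 0); [subst; rewrite xext0; lra|].
  destruct (Nat.eq_dec j (S n)); [subst; rewrite xextN; lra|].
  destruct Hv as [H1 [H2 H3]].
  rewrite !xext_real by lia. apply H2; lia.
Qed.

Theorem lemma11 (n : nat) (x : nat -> R) (b : nat -> Q) (T : R) :
  valid_instance n x b ->
  optimal_lifetime n x b T ->
  exists i k : nat, (i < k)%nat /\ (k <= S n)%nat /\
    xext n x i < xext n x k /\
    T = (bext n b k + bext n b i) / (xext n x k - xext n x i).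
Proof.
  intros Hv [[rho0 [Hrad0 [[HT0 Hcov0] _]]] Hopt].
  pose proof Hv as [Hx [Hs Hb]].
  destruct (Req_dec T 0) as [HT|HT].
  { exists 0%nat, (S n). rewrite xext0, xextN, bext0, bextN.
    repeat split; try lia; try lra. }
  assert (Tpos : 0 < T) by lra.
  set (v := fun i k => (bext n b k + bext n b i) / (xext n x k - xext n x i)).
  destruct (eps2 v T (S n)) as [e [He Hve]].
  set (T' := T + e).
  assert (T'pos : 0 < T') by (unfold T'; lra).
  set (rho := fun j => Q2R (b j) / T').
  assert (ratio : forall j, Q2R (b j) <> 0 -> Q2R (b j) / rho j = T').
  { intros j Hj. unfold rho. field. split; lra. }
  assert (Hnc : ~ covered_at n x b rho T').
  { intro Hc.
    assert (Hl : is_lifetime n x b rho T').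
    { split.
      - split; [lra|]. intros t Ht p Hp.
        destruct (Hc p Hp) as [j [Hj [Hr [Ht' Hx']]]].
        exists j; repeat split; try lia; try lra.
      - intros L' [HL' HcL']. destruct (Rle_dec L' T') as [|Hgt]; auto.
        exfalso. destruct (HcL' L' (conj HL' (Rle_refl _)) 0 ltac:(lra))
          as [j [Hj [Hr [Ht' _]]]].
        assert (Q2R (b j) <> 0).
        { intro Hz. unfold rho in Hr. rewrite Hz in Hr. unfold Rdiv in Hr.
          rewrite Rmult_0_l in Hr. lra. }
        rewrite ratio in Ht' by auto. lra. }
    assert (Hr : radial n rho).
    { intros i Hi. unfold rho. apply Rdiv_le_0_compat; [|lra].
      apply Q2R_nonneg, Hb; lia. }
    specialize (Hopt rho T' Hr Hl). unfold T' in Hopt. lra. }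
  destruct (not_all_ex_not _ _ Hnc) as [p Hp].
  apply imply_to_and in Hp. destruct Hp as [Hp1 Hp2].
  assert (Unc : forall j, (1 <= j <= n)%nat -> 0 < Q2R (b j) ->
            p < x j - Q2R (b j) / T' \/ x j + Q2R (b j) / T' < p).
  { intros j Hj Hbj.
    destruct (Rlt_dec p (x j - Q2R (b j) / T')); [left; auto|].
    destruct (Rlt_dec (x j + Q2R (b j) / T') p); [right; auto|].
    exfalso. apply Hp2. exists j.
    assert (0 < rho j) by (unfold rho; apply Rdiv_lt_0_compat; lra).
    rewrite ratio by lra. unfold rho in *. repeat split; try lia; try lra. }
  set (Left := fun j => j = 0%nat \/
     ((1 <= j <= n)%nat /\ 0 < Q2R (b j) /\ x j + Q2R (b j) / T' < p)).
  set (Right := fun l => l = S n \/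
     ((1 <= l <= n)%nat /\ 0 < Q2R (b l) /\ p < x l - Q2R (b l) / T')).
  assert (Pre : forall j l, Left j -> Right l ->
     (j <= S n)%nat /\ (l <= S n)%nat /\
     xext n x j + bext n b j / T' <= xext n x l - bext n b l / T' /\
     xext n x j < xext n x l).
  { intros j l Hj Hl.
    destruct Hj as [Hj|[Hj1 [Hj2 Hj3]]]; destruct Hl as [Hl|[Hl1 [Hl2 Hl3]]].
    - subst. rewrite xext0, bext0, xextN, bextN. unfold Rdiv.
      repeat split; try lia; lra.
    - subst. rewrite xext0, bext0, xext_real, bext_real by lia.
      assert (0 < Q2R (b l) / T') by (apply Rdiv_lt_0_compat; lra).
      unfold Rdiv at 1. rewrite Rmult_0_l. repeat split; try lia; lra.
    - subst. rewrite xextN, bextN, xext_real, bext_real by lia.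
      assert (0 < Q2R (b j) / T') by (apply Rdiv_lt_0_compat; lra).
      unfold Rdiv at 2. rewrite Rmult_0_l. repeat split; try lia; lra.
    - rewrite !xext_real, !bext_real by lia.
      assert (0 < Q2R (b j) / T') by (apply Rdiv_lt_0_compat; lra).
      assert (0 < Q2R (b l) / T') by (apply Rdiv_lt_0_compat; lra).
      repeat split; try lia; lra. }
  assert (Pair : forall j l, Left j -> Right l ->
     xext n x j + bext n b j / T <= xext n x l - bext n b l / T).
  { intros j l Hj Hl. destruct (Pre j l Hj Hl) as [Hj' [Hl' [H1 H2]]].
    set (d := xext n x l - xext n x j) in *.
    set (bj := bext n b j) in *. set (bl := bext n b l) in *.
    assert (Hd : 0 < d) by (unfold d; lra).
    assert (E1 : bj / T' * T' = bj) by (field; lra).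
    assert (E2 : bl / T' * T' = bl) by (field; lra).
    assert (E3 : bj / T * T = bj) by (field; lra).
    assert (E4 : bl / T * T = bl) by (field; lra).
    assert (E5 : v j l * d = bl + bj) by (unfold v; fold d bj bl; field; lra).
    assert (S1 : bj / T' + bl / T' <= d) by (unfold d; lra).
    assert (S2 : bl + bj <= d * T') by nra.
    assert (S3 : v j l <= T') by nra.
    destruct (Hve j l Hj' Hl') as [S4|S4]; [|unfold T' in S3; lra].
    assert (S5 : bl + bj <= d * T) by nra.
    assert (S6 : bj / T + bl / T <= d) by nra.
    unfold d in S6. lra. }
  destruct (argmax Left (fun j => xext n x j + bext n b j / T) (S n))
    as [i [Hi [Li Mi]]].
  { exists 0%nat; split; [lia|]. left; reflexivity. }
  destruct (argmax Right (fun j => - (xext n x j - bext n b j / T)) (S n))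
    as [k [Hk [Rk Mk]]].
  { exists (S n); split; [lia|]. left; reflexivity. }
  simpl in Mi, Mk.
  set (A := xext n x i + bext n b i / T) in *.
  set (C := xext n x k - bext n b k / T) in *.
  assert (HAC : A <= C) by (apply Pair; auto).
  destruct (Pre i k Li Rk) as [_ [_ [_ Hik]]].
  pose proof (xext_range n x b i Hv Hi). pose proof (xext_range n x b k Hv Hk).
  pose proof (bext_nonneg n x b i Hv Hi). pose proof (bext_nonneg n x b k Hv Hk).
  assert (0 <= bext n b i / T) by (apply Rdiv_le_0_compat; lra).
  assert (0 <= bext n b k / T) by (apply Rdiv_le_0_compat; lra).
  set (q := (A + C) / 2).
  assert (Hq : 0 <= q <= 1) by (unfold q, A, C in *; lra).
  destruct (Hcov0 T (conj HT0 (Rle_refl T)) q Hq)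
    as [j [Hj [Hrj [HTj Hxj]]]].
  set (bj := Q2R (b j)) in *.
  assert (Eu : bj / rho0 j * rho0 j = bj) by (field; lra).
  assert (Er : bj / T * T = bj) by (field; lra).
  assert (Hbj : 0 < bj) by nra.
  assert (Hrr : rho0 j <= bj / T) by nra.
  assert (HAeqC : A = C).
  { destruct (Unc j Hj Hbj) as [HR|HL].
    - assert (RJ : Right j) by (right; repeat split; auto; lia).
      specialize (Mk j ltac:(lia) RJ).
      rewrite xext_real, bext_real in Mk by lia. fold bj in Mk.
      unfold q in Hxj. lra.
    - assert (LJ : Left j) by (right; repeat split; auto; lia).
      specialize (Mi j ltac:(lia) LJ).
      rewrite xext_real, bext_real in Mi by lia. fold bj in Mi.
      unfold q in Hxj. lra. }
  exists i, k. repeat split; auto.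
  - destruct (le_lt_dec k i) as [Hki|]; auto.
    pose proof (xext_mono n x b k i Hv Hki Hi). lra.
  - assert (Ei : bext n b i / T * T = bext n b i) by (field; lra).
    assert (Ek : bext n b k / T * T = bext n b k) by (field; lra).
    assert (Hsum : bext n b k + bext n b i = T * (xext n x k - xext n x i)).
    { unfold A, C in HAeqC. nra. }
    rewrite Hsum. field. lra.
Qed.
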